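(* Let $(R,\mathfrak{m},k)$ be a local ring, let $R(k)$ be the trivial extension of $R$ by $k$, and let $M$, $N$ be nonzero, non-free, finitely generated $R(k)$-modules. Then $\mathrm{Tor}_n^{R(k)}(M,N)\neq 0$ for all $n\geq 3$.
   Context: All rings are commutative Noetherian with unity. For an $R$-module $M$, the trivial extension $R(M)$ is the ring whose underlying additive group is $R\oplus M$ with multiplication $(r,m)\cdot(r',m')=(rr',rm'+r'm)$. *)

(* Defs.v *)
From HB Require Import structures.
From mathcomp Require Import all_boot all_order all_algebra.
From mathcomp Require Import ring.
Set Implicit Arguments. Unset Strict Implicit. Unset Printing Implicit Defensive.
Import Order.TTheory GRing.Theory Num.Theory.
Local Open Scope ring_scope.

Definition is_ideal (R : comNzRingType) (I : R -> Prop) : Prop :=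
  [/\ I 0, (forall x y, I x -> I y -> I (x + y)) & (forall r x, I x -> I (r * x))].

Definition finitely_generated_ideal (R : comNzRingType) (I : R -> Prop) : Prop :=
  exists s : seq R, forall x, I x <->
     exists c : 'I_(size s) -> R, x = \sum_(i < size s) c i * s`_i.

Definition noetherian (R : comNzRingType) : Prop :=
  forall I : R -> Prop, is_ideal I -> finitely_generated_ideal I.

Definition proper_ideal (R : comNzRingType) (I : R -> Prop) : Prop :=
  is_ideal I /\ ~ I 1.

Definition maximal_ideal (R : comNzRingType) (I : R -> Prop) : Prop :=
  proper_ideal I /\
  forall J : R -> Prop, proper_ideal J -> (forall x, I x -> J x) -> forall x, J x -> I x.

Definition local_ring (R : comNzRingType) : Prop :=
  exists m : R -> Prop, maximal_ideal m /\
    forall m' : R -> Prop, maximal_ideal m' -> forall x, m' x <-> m x.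

(* The trivial extension R(k) = R ⋉ k, where k is the residue field,   *)
(* given as a field k with a surjective ring morphism pi : R -> k       *)
(* (so that k = R/ker pi = R/m when R is local).  k is an R-module via  *)
(* r . a = pi r * a.                                                    *)

Section TrivExt.
Variables (R : comNzRingType) (k : fieldType) (pi : {rmorphism R -> k}).

Definition triv_ext (p : {rmorphism R -> k}) : Type := (R * k)%type.
HB.instance Definition _ := GRing.Zmodule.copy (triv_ext pi) (R * k)%type.

Definition te_one : triv_ext pi := (1, 0).
Definition te_mul (x y : triv_ext pi) : triv_ext pi :=
  (x.1 * y.1, pi x.1 * y.2 + pi y.1 * x.2).

Lemma te_mulA : associative te_mul.
Proof.
move=> [r a] [s b] [t c]; rewrite /te_mul /=; congr (_, _); first by rewrite mulrA.
rewrite !rmorphM; ring.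
Qed.

Lemma te_mulC : commutative te_mul.
Proof. by move=> [r a] [s b]; rewrite /te_mul /= mulrC addrC. Qed.

Lemma te_mul1r : left_id te_one te_mul.
Proof. move=> [r a]; rewrite /te_mul /=; congr (_, _); first exact: mul1r.
rewrite rmorph1; ring. Qed.

Lemma te_mulDl : left_distributive te_mul +%R.
Proof.
move=> [r a] [s b] [t c]; rewrite /te_mul /=; congr (_, _); first by rewrite mulrDl.
rewrite rmorphD /=; ring.
Qed.

Lemma te_oner_neq0 : te_one != 0.
Proof. by apply/negP => /eqP [] /eqP; rewrite oner_eq0. Qed.

HB.instance Definition _ := GRing.Zmodule_isComNzRing.Build (triv_ext pi)
  te_mulA te_mulC te_mul1r te_mulDl te_oner_neq0.

End TrivExt.
Arguments triv_ext {R k} p.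

Definition finitely_generated_module (S : comNzRingType) (M : lmodType S) : Prop :=
  exists (n : nat) (g : 'I_n -> M),
    forall x : M, exists c : 'I_n -> S, x = \sum_(i < n) c i *: g i.

(* free (with a finite basis; a finitely generated free module over a
   nonzero commutative ring has a finite basis) *)
Definition free_module (S : comNzRingType) (M : lmodType S) : Prop :=
  exists (n : nat) (e : 'I_n -> M),
    forall x : M, exists! c : 'I_n -> S, x = \sum_(i < n) c i *: e i.

Definition nonzero_module (S : comNzRingType) (M : lmodType S) : Prop :=
  exists x : M, x != 0.

(* F_i = S^(b i) (row vectors), differential F_(i+1) -> F_i is          *)
(* u |-> u *m d i, augmentation F_0 -> M is u |-> \sum_j u_j *: eps j.   *)

Record free_resolution (S : comNzRingType) (M : lmodType S) := FreeRes {
  fr_rank : nat -> nat;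
  fr_d : forall i : nat, 'M[S]_(fr_rank i.+1, fr_rank i);
  fr_eps : 'I_(fr_rank 0) -> M
}.
Arguments fr_rank {S M} F i : rename.
Arguments fr_d {S M} F i : rename.
Arguments fr_eps {S M} F j : rename.

Definition fr_aug (S : comNzRingType) (M : lmodType S) (F : free_resolution M)
  (u : 'rV[S]_(fr_rank F 0)) : M :=
  \sum_(j < fr_rank F 0) u 0 j *: fr_eps F j.

Arguments fr_aug {S M} F u.

Definition is_free_resolution (S : comNzRingType) (M : lmodType S)
  (F : free_resolution M) : Prop :=
  [/\
      (forall x : M, exists u, fr_aug F u = x),
      (forall u : 'rV[S]_(fr_rank F 0),
         fr_aug F u = 0 <-> exists w, u = w *m fr_d F 0) &
      (forall (i : nat) (u : 'rV[S]_(fr_rank F i.+1)),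
         u *m fr_d F i = 0 <-> exists w, u = w *m fr_d F i.+1)].

(* F ⊗_S N in degree i is N^(fr_rank F i); the differential d_i ⊗ 1 *)
Definition tensor_d (S : comNzRingType) (M N : lmodType S)
  (F : free_resolution M) (i : nat)
  (x : 'I_(fr_rank F i.+1) -> N) : 'I_(fr_rank F i) -> N :=
  fun j => \sum_(l < fr_rank F i.+1) fr_d F i l j *: x l.

Arguments tensor_d {S M N} F {i} x j.

(* Tor_(n+1)^S(M, N) = H_(n+1)(F ⊗_S N) is nonzero *)
Definition tor_succ_nonzero (S : comNzRingType) (M N : lmodType S)
  (F : free_resolution M) (n : nat) : Prop :=
  exists x : 'I_(fr_rank F n.+1) -> N,
    (forall j, tensor_d F x j = 0) /\
    ~ (exists y : 'I_(fr_rank F n.+2) -> N, forall l, x l = tensor_d F y l).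

Arguments tor_succ_nonzero {S M} N F n.

(* Tor_n^S(M,N) <> 0 for n >= 1, computed with any free resolution of M
   (Tor does not depend on the resolution). *)
Definition Tor_nonzero (S : comNzRingType) (M N : lmodType S) (n : nat) : Prop :=
  forall F : free_resolution M, is_free_resolution F ->
    tor_succ_nonzero N F n.-1.

Arguments Tor_nonzero {S} M N n.

(* Main.v *)
Require Import Defs.
From HB Require Import structures.
From mathcomp Require Import all_boot all_order all_algebra ring.
From Stdlib Require Import Classical ClassicalEpsilon FunctionalExtensionality.
Set Implicit Arguments. Unset Strict Implicit. Unset Printing Implicit Defensive.
Import GRing.Theory.
Local Open Scope ring_scope.

Section TE.
Variables (R : comNzRingType) (k : fieldType) (pi : {rmorphism R -> k}).
Local Notation S := (triv_ext pi).

Lemma fst_add (x y : S) : (x + y).1 = x.1 + y.1. Proof. by []. Qed.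
Lemma snd_add (x y : S) : (x + y).2 = x.2 + y.2. Proof. by []. Qed.
Lemma fst_opp (x : S) : (- x).1 = - x.1. Proof. by []. Qed.
Lemma snd_opp (x : S) : (- x).2 = - x.2. Proof. by []. Qed.
Lemma fst_mul (x y : S) : (x * y).1 = x.1 * y.1. Proof. by []. Qed.
Lemma snd_mul (x y : S) : (x * y).2 = pi x.1 * y.2 + pi y.1 * x.2. Proof. by []. Qed.
Lemma fst0 : (0 : S).1 = 0. Proof. by []. Qed.
Lemma snd0 : (0 : S).2 = 0. Proof. by []. Qed.
Lemma fst1 : (1 : S).1 = 1. Proof. by []. Qed.
Lemma snd1 : (1 : S).2 = 0. Proof. by []. Qed.
Lemma S_eq (x y : S) : x.1 = y.1 -> x.2 = y.2 -> x = y.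
Proof. by case: x y => [a b] [c d] /= -> ->. Qed.

Definition red (s : S) : k := pi s.1.
Lemma red_zmod : zmod_morphism red.
Proof. by move=> x y; rewrite /red fst_add fst_opp rmorphB. Qed.
Lemma red_monoid : monoid_morphism red.
Proof. by split; [rewrite /red fst1 rmorph1 | move=> x y; rewrite /red fst_mul rmorphM]. Qed.
HB.instance Definition _ := GRing.isZmodMorphism.Build S k red red_zmod.
HB.instance Definition _ := GRing.isMonoidMorphism.Build S k red red_monoid.

Definition tt_ : S := (0, 1).
Lemma tt_mul (s : S) : tt_ * s = (0, red s).
Proof. apply: S_eq; rewrite ?fst_mul ?snd_mul /= ?mul0r //.
by rewrite rmorph0 mul0r add0r mulr1. Qed.
Lemma mul_tt (s : S) : s * tt_ = (0, red s).
Proof. by rewrite mulrC tt_mul. Qed.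
Lemma tt_mul0 (s : S) : red s = 0 -> tt_ * s = 0.
Proof. by move=> h; rewrite tt_mul h. Qed.
Lemma red_tt : red tt_ = 0. Proof. by rewrite /red /= rmorph0. Qed.
End TE.
Section Ideals.
Variable (R : comNzRingType).

Lemma ideal_sum (J : R -> Prop) n (s : 'I_n -> R) (c : 'I_n -> R) :
  is_ideal J -> (forall i, J (s i)) -> J (\sum_(i < n) c i * s i).
Proof.
move=> [J0 JD JM] Js; apply: (big_ind J) => //.
by move=> i _; apply: JM.
Qed.

Lemma exists_max (hnoeth : noetherian R) (I : R -> Prop) :
  Defs.proper_ideal I -> exists m, maximal_ideal m /\ forall x, I x -> m x.
Proof.
move=> PI; apply: NNPP => H.
pose P J := Defs.proper_ideal J /\ (forall x, I x -> J x).
have step : forall J : R -> Prop, exists J' : R -> Prop, P J ->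
   (P J' /\ (forall x, J x -> J' x) /\ exists x, J' x /\ ~ J x).
  move=> J; case: (classic (P J)) => [PJ|nPJ]; last by exists J.
  have nm : ~ maximal_ideal J by move=> mJ; apply: H; exists J; split => //; case: PJ.
  have : ~ (forall J', Defs.proper_ideal J' -> (forall x, J x -> J' x) -> forall x, J' x -> J x).
    by move=> hh; apply: nm; split => //; case: PJ.
  move=> /not_all_ex_not [J' HJ'].
  have [pJ' HJ2] := imply_to_and _ _ HJ'.
  have [sJ HJ3] := imply_to_and _ _ HJ2.
  have [x Hx] := not_all_ex_not _ _ HJ3.
  have [J'x nJx] := imply_to_and _ _ Hx.
  exists J' => _; split; last by split => //; exists x.
  by split => // y Iy; apply: sJ; apply: PJ.2.
pose f J := proj1_sig (constructive_indefinite_description _ (step J)).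
have fP J : P J -> (P (f J) /\ (forall x, J x -> f J x) /\ exists x, f J x /\ ~ J x).
  exact: (proj2_sig (constructive_indefinite_description _ (step J))).
pose c n := iter n f I.
have cP n : P (c n).
  elim: n => [|n IH]; first by split => //.
  by rewrite /c iterS; case: (fP _ IH).
have cS n x : c n x -> c n.+1 x by move=> h; rewrite /c iterS; case: (fP _ (cP n)) => _ [sub _]; exact: sub.
have cM n m x : (n <= m)%N -> c n x -> c m x.
  move=> /subnK <-; elim: (m - n)%N => [|d IH] h //; rewrite addSn; apply: cS; exact: IH.
pose U x := exists n, c n x.
have cid_n n : is_ideal (c n) by case: (cP n) => [[]].
have UI : is_ideal U.
  split; first by exists 0%N; case: (cid_n 0%N).
    move=> x y [n xn] [m ym]; exists (maxn n m).
    case: (cid_n (maxn n m)) => _ D _; apply: D.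
      exact: (cM n _ _ (leq_maxl n m) xn).
    exact: (cM m _ _ (leq_maxr n m) ym).
  by move=> r x [n xn]; exists n; case: (cid_n n) => _ _ ; apply.
have [s hs] := hnoeth U UI.
have Us : forall i : 'I_(size s), exists n, c n s`_i.
  move=> i; apply/hs; exists (fun j => if j == i then 1 else 0).
  rewrite (bigD1 i) //= eqxx mul1r big1 ?addr0 // => j /negbTE ->; by rewrite mul0r.
have [ns hns] := fin_all_exists Us.
pose N := (\max_(i < size s) ns i)%N.
have sN (i : 'I_(size s)) : c N s`_i.
  have := @leq_bigmax (ordinal (size s)) (fun j => ns j) i; rewrite -/N => hle. exact: (cM _ _ _ hle (hns i)).
have UN x : U x -> c N x.
  move=> /hs [cc ->]; apply: ideal_sum => //.
case: (fP _ (cP N)) => _ [_ [x [xN1 nxN]]].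
by apply: nxN; apply: UN; exists N.+1.
Qed.

End Ideals.

Section Units.
Variables (R : comNzRingType) (k : fieldType) (pi : {rmorphism R -> k}).
Hypotheses (hnoeth : noetherian R) (hloc : local_ring R)
  (hpi : forall a : k, exists r : R, pi r = a).

Lemma ker_max : maximal_ideal (fun x : R => pi x = 0).
Proof.
split.
  split; last by rewrite rmorph1; apply/eqP; exact: oner_neq0.
  split; first exact: rmorph0.
    by move=> x y hx hy; rewrite rmorphD hx hy addr0.
  by move=> r x hx; rewrite rmorphM hx mulr0.
move=> J [[J0 JD JM] nJ1] sub x Jx; apply: NNPP => hx.
have [y hy] := hpi (pi x)^-1.
have h1 : J (y * x - 1).
  apply: sub; rewrite rmorphB rmorphM hy rmorph1 mulVf ?subrr //; exact/eqP.
have h2 : J (y * x) by apply: JM.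
apply: nJ1.
have -> : (1 : R) = y * x + (-1) * (y * x - 1) by ring.
by apply: JD => //; apply: JM.
Qed.

Lemma unitR (r : R) : pi r != 0 -> exists r', r' * r = 1.
Proof.
move=> hr; apply: NNPP => nu.
pose I x := exists y, x = y * r.
have PI : Defs.proper_ideal I.
  split.
    split; first by exists 0; rewrite mul0r.
      by move=> x y [a ->] [b ->]; exists (a + b); rewrite mulrDl.
    by move=> s x [a ->]; exists (s * a); rewrite mulrA.
  by move=> [y hy]; apply: nu; exists y.
have [m [mm Im]] := exists_max hnoeth PI.
have [m0 [_ hm0]] := hloc.
have : m0 r by apply/(hm0 m mm)/Im; exists 1; rewrite mul1r.
move/(hm0 _ ker_max) => h; by move/eqP: hr.
Qed.

Lemma unitS (s : triv_ext pi) : red s != 0 -> exists s', s' * s = 1.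
Proof.
move=> hs; have [r' hr'] := unitR hs.
exists (r', - (pi r' * pi r' * s.2)); apply: S_eq.
  by rewrite (fst_mul (r', _) s) /= hr'.
rewrite (snd_mul (r', _) s) /= .
have e : pi r' * pi s.1 = 1 by rewrite -rmorphM hr' rmorph1.
transitivity (pi r' * s.2 * (1 - pi r' * pi s.1)); first by ring.
by rewrite e subrr mulr0.
Qed.
End Units.

Lemma rows_exist (T : Type) m n (P : 'I_m -> 'rV[T]_n -> Prop) :
  (forall i, exists x, P i x) -> exists X : 'M[T]_(m, n), forall i, P i (row i X).
Proof.
move=> h; have [u hu] := fin_all_exists h.
by exists (\matrix_i u i) => i; rewrite rowK.
Qed.

Definition submod (A : comNzRingType) m (K : 'rV[A]_m -> Prop) :=
  [/\ K 0, (forall x y, K x -> K y -> K (x + y)) & (forall a x, K x -> K (a *: x))].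

Lemma submod_comb (A : comNzRingType) m r (K : 'rV[A]_m -> Prop) (C : 'M[A]_(r, m)) s :
  submod K -> (forall i, K (row i C)) -> K (s *m C).
Proof.
move=> [K0 KD KZ] KC; rewrite mulmx_sum_row; apply: (big_ind K) => //.
by move=> i _; apply: KZ.
Qed.

Lemma ex_minP (P : nat -> Prop) : (exists n, P n) -> exists n, P n /\ forall m, (m < n)%N -> ~ P m.
Proof.
move=> [n Pn]; elim: n {-2}n (leqnn n) Pn => [|b IH] n hn Pn.
  exists n; split => // m; rewrite (leqn0 n) in hn; by rewrite (eqP hn).
case: (classic (exists m, (m < n)%N /\ P m)) => [[m [hm Pm]]|nm].
  by apply: (IH m) => //; rewrite -ltnS (leq_trans hm hn).
by exists n; split => // m hm Pm; apply: nm; exists m.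
Qed.

Section Noeth.
Variable (A : comNzRingType).
Hypothesis hn : noetherian A.

Lemma noeth_rV m (K : 'rV[A]_m -> Prop) : submod K ->
  exists r (C : 'M[A]_(r, m)), forall v, K v <-> exists s, v = s *m C.
Proof.
elim: m K => [|m IH] K sK.
  exists 0%N, 0 => v; rewrite (thinmx0 v) ; split; first by move=> _; exists 0; rewrite mulmx0.
  by move=> _; case: sK.
have [K0 KD KZ] := sK.
pose I a := exists v, K v /\ lsubmx (v : 'rV_(1 + m)) 0 0 = a.
have II : is_ideal I.
  split; first by exists 0; split => //; rewrite linear0 mxE.
    move=> a b [v [Kv <-]] [w [Kw <-]]; exists (v + w); split; first exact: KD.
    by rewrite linearD mxE.
  move=> a b [v [Kv <-]]; exists (a *: v); split; first exact: KZ.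
  by rewrite linearZ mxE.
have [s hs] := hn II.
have Is : forall i : 'I_(size s), exists v, K v /\ lsubmx (v : 'rV_(1 + m)) 0 0 = s`_i.
  move=> i; apply/hs; exists (fun j => if j == i then 1 else 0).
  rewrite (bigD1 i) //= eqxx mul1r big1 ?addr0 // => j /negbTE ->; by rewrite mul0r.
have [X hX] := rows_exist Is.
pose K' (y : 'rV[A]_m) := K (row_mx 0 y : 'rV_(1 + m)).
have sK' : submod K'.
  split; first by rewrite /K' row_mx0.
    by move=> x y; rewrite /K' -{3}(addr0 0) -add_row_mx; apply: KD.
  by move=> a x; rewrite /K' -{2}(scaler0 _ a) -scale_row_mx; apply: KZ.
have [r' [C' hC']] := IH K' sK'.
exists (size s + r')%N, (col_mx (X : 'M_(size s, 1 + m)) (row_mx (0 : 'M_(r', 1)) C') : 'M_(size s + r', 1 + m)) => v; split.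
  move=> Kv.
  have hI : I (lsubmx (v : 'rV_(1 + m)) 0 0) by exists v.
  move/hs: hI => [c hc].
  pose cr : 'rV_(size s) := \row_i c i.
  pose w : 'rV_(1 + m) := v - cr *m X.
  have Kw : K w.
    apply: KD => //; rewrite -scaleN1r; apply: KZ; apply: submod_comb => // i.
    by case: (hX i).
  have lw : lsubmx w = 0.
    apply/rowP => j; rewrite (ord1 j) !mxE /w.
    move: hc; rewrite !mxE => ->.
    apply/eqP; rewrite subr_eq0; apply/eqP; apply: eq_bigr => i _.
    case: (hX i) => _; rewrite !mxE => ->; by rewrite mulrC.
  have : K' (rsubmx w) by rewrite /K' -lw hsubmxK.
  move/hC' => [s' hs'].
  exists (row_mx cr s'); rewrite mul_row_col.
  have -> : s' *m (row_mx 0 C' : 'M_(r', 1 + m)) = row_mx 0 (s' *m C') by rewrite mul_mx_row mulmx0.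
  have -> : (row_mx 0 (s' *m C') : 'rV_(1 + m)) = w by rewrite -hs' -lw hsubmxK.
  by rewrite /w addrC subrK.
move=> [s0 ->]; apply: submod_comb => // i.
rewrite -(splitK i); case: (split i) => j /=; first by rewrite rowKu; case: (hX j).
rewrite rowKd.
have -> : row j (row_mx (0 : 'M_(r', 1)) C' : 'M_(r', 1 + m)) = row_mx 0 (row j C')
  by rewrite row_row_mx row0.
apply/(hC' (row j C')).
by exists (delta_mx 0 j); rewrite rowE.
Qed.
End Noeth.

Section NoethS.
Variables (R : comNzRingType) (k : fieldType) (pi : {rmorphism R -> k}).
Hypotheses (hnoeth : noetherian R) (hpi : forall a : k, exists r : R, pi r = a).
Local Notation S := (triv_ext pi).

Definition iotaS (r : R) : S := (r, 0).
Lemma iota_zmod : zmod_morphism iotaS.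
Proof. by move=> x y; apply: S_eq => /=; rewrite ?subr0. Qed.
Lemma iota_monoid : monoid_morphism iotaS.
Proof.
split => // x y; apply: S_eq => //.
by rewrite snd_mul /= !mulr0 addr0.
Qed.
HB.instance Definition _ := GRing.isZmodMorphism.Build R S iotaS iota_zmod.
HB.instance Definition _ := GRing.isMonoidMorphism.Build R S iotaS iota_monoid.

Definition liftk (a : k) : R := proj1_sig (constructive_indefinite_description _ (hpi a)).
Lemma liftkP a : pi (liftk a) = a.
Proof. exact: (proj2_sig (constructive_indefinite_description _ (hpi a))). Qed.
Definition liftS (a : k) : S := iotaS (liftk a).
Lemma red_liftS a : red (liftS a) = a.
Proof. by rewrite /red /= liftkP. Qed.
Lemma red_iota r : red (iotaS r) = pi r. Proof. by []. Qed.

Definition phiM r p (C : 'M[R]_(r, p + p)) : 'M[S]_(r, p) :=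
  map_mx iotaS (lsubmx C) + tt_ pi *: map_mx iotaS (rsubmx C).

Lemma phiM_mul r r' p (s : 'M[R]_(r', r)) (C : 'M[R]_(r, p + p)) :
  phiM (s *m C) = map_mx iotaS s *m phiM C.
Proof. by rewrite /phiM mulmxDr -mulmx_lsub -mulmx_rsub !map_mxM scalemxAr. Qed.

Lemma phiM_row r p i (C : 'M[R]_(r, p + p)) : row i (phiM C) = phiM (row i C).
Proof. by apply/rowP => j; rewrite !mxE. Qed.

Lemma noeth_S p (K : 'rV[S]_p -> Prop) : submod K ->
  exists r (C : 'M[S]_(r, p)), forall v, K v <-> exists s, v = s *m C.
Proof.
move=> [K0 KD KZ].
pose KR (u : 'rV[R]_(p + p)) := K (phiM u).
have sKR : submod KR.
  split.
  - by rewrite /KR /phiM !linear0 !map_mx0 scaler0 addr0.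
  - move=> x y; rewrite /KR /phiM !linearD !map_mxD scalerDr addrACA; exact: KD.
  - move=> a x; rewrite /KR /phiM !linearZ !map_mxZ /=.
    have -> : tt_ pi *: (iotaS a *: map_mx iotaS (rsubmx x)) = iotaS a *: (tt_ pi *: map_mx iotaS (rsubmx x)).
      by rewrite !scalerA mulrC.
    rewrite -scalerDr; exact: KZ.
have [r [C hC]] := noeth_rV hnoeth sKR.
exists r, (phiM C) => v; split.
  move=> Kv.
  pose u : 'rV[R]_(p + p) := row_mx (\row_j (v 0 j).1) (\row_j liftk (v 0 j).2).
  have hu : phiM u = v.
    apply/rowP => j; rewrite /phiM /u row_mxKl row_mxKr !mxE.
    apply: S_eq => /=; first by rewrite mul0r addr0.
    by rewrite rmorph0 mul0r !add0r mulr1 liftkP.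
  have : KR u by rewrite /KR hu.
  move/hC => [s hs]; exists (map_mx iotaS s); by rewrite -phiM_mul -hs hu.
move=> [s ->]; apply: submod_comb => // i; rewrite phiM_row.
by apply/hC; exists (delta_mx 0 i); rewrite rowE.
Qed.
End NoethS.

Section Main.
Variables (R : comNzRingType) (k : fieldType) (pi : {rmorphism R -> k}).
Hypotheses (hnoeth : noetherian R) (hloc : local_ring R)
  (hpi : forall a : k, exists r : R, pi r = a).
Local Notation S := (triv_ext pi).
Local Notation rd := (@red _ _ pi).
Local Notation redm A := (map_mx rd A).

Lemma unitS' (s : S) : rd s != 0 -> exists s', s' * s = 1.
Proof. exact: (unitS hnoeth hloc hpi). Qed.

Lemma left_inv n (A : 'M[S]_n) : rd (\det A) != 0 -> exists B, B *m A = 1%:M.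
Proof.
move=> h; have [d hd] := unitS' h.
exists (d *: \adj A); by rewrite -scalemxAl mul_adj_mx scale_scalar_mx hd.
Qed.

Lemma cancel_red1 n m (E : 'M[S]_n) (C : 'M[S]_(n, m)) :
  redm E = 0 -> (1%:M - E) *m C = 0 -> C = 0.
Proof.
move=> hE h.
have hd : rd (\det (1%:M - E)) != 0.
  by rewrite -det_map_mx map_mxB map_mx1 hE subr0 det1 oner_neq0.
have [B hB] := left_inv hd.
by rewrite -[C]mul1mx -hB -mulmxA h mulmx0.
Qed.

Section Mod.
Variable X : lmodType S.

Definition lc p (g : 'I_p -> X) (v : 'rV[S]_p) : X := \sum_q v 0 q *: g q.
Definition gens p (g : 'I_p -> X) := forall x, exists v, x = lc g v.
Definition relv p (g : 'I_p -> X) v := lc g v = 0.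
Definition inNK p (g : 'I_p -> X) (c : 'rV[S]_p) :=
  exists L (E : 'rV[S]_L) (P : 'M[S]_(L, p)),
    [/\ redm E = 0, (forall l, relv g (row l P)) & c = E *m P].

Lemma lcD p (g : 'I_p -> X) v w : lc g (v + w) = lc g v + lc g w.
Proof. by rewrite /lc -big_split; apply: eq_bigr => q _; rewrite mxE scalerDl. Qed.
Lemma lcZ p (g : 'I_p -> X) a v : lc g (a *: v) = a *: lc g v.
Proof. by rewrite /lc scaler_sumr; apply: eq_bigr => q _; rewrite mxE scalerA. Qed.
Lemma lc0 p (g : 'I_p -> X) : lc g 0 = 0.
Proof. by rewrite /lc big1 // => q _; rewrite mxE scale0r. Qed.
Lemma lcN p (g : 'I_p -> X) v : lc g (- v) = - lc g v.
Proof. by rewrite -(scaleN1r v) lcZ scaleN1r. Qed.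
Lemma lcB p (g : 'I_p -> X) v w : lc g (v - w) = lc g v - lc g w.
Proof. by rewrite lcD lcN. Qed.
Lemma lc_mul p r (g : 'I_p -> X) (u : 'rV[S]_r) (C : 'M[S]_(r, p)) :
  lc g (u *m C) = \sum_i u 0 i *: lc g (row i C).
Proof.
rewrite /lc; under eq_bigr => q _ do rewrite mxE scaler_suml.
rewrite exchange_big /=; apply: eq_bigr => i _; rewrite scaler_sumr.
by apply: eq_bigr => q _; rewrite !mxE scalerA.
Qed.

Lemma relv_submod p (g : 'I_p -> X) : submod (relv g).
Proof.
split; first exact: lc0.
  by move=> x y; rewrite /relv lcD => -> ->; rewrite addr0.
by move=> a x; rewrite /relv lcZ => ->; rewrite scaler0.
Qed.

Lemma KL : finitely_generated_module X -> ~ free_module X ->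
  exists p (g : 'I_p -> X), [/\ gens g, (forall v, relv g v -> redm v = 0) &
     exists c, relv g c /\ ~ inNK g c].
Proof.
move=> hfg hfree.
have : exists p, exists g : 'I_p -> X, gens g.
  case: hfg => n [g hg]; exists n, g => x; have [c hc] := hg x.
  by exists (\row_i c i); rewrite hc /lc; apply: eq_bigr => i _; rewrite mxE.
move/ex_minP => [p [[g gg] pmin]].
exists p, g; split => //.
- move=> v hv; apply/matrixP => i q; rewrite (ord1 i) !mxE.
  case: (eqVneq (rd (v 0 q)) 0) => // hq; exfalso.
  have hp : (p.-1 < p)%N by rewrite ltn_predL (leq_ltn_trans (leq0n q) (ltn_ord q)).
  apply: (pmin p.-1 hp); exists (fun i => g (lift q i)) => x.
  have [u hu] := unitS' hq.
  have [c ->] := gg x.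
  exists (\row_i (c 0 (lift q i) - c 0 q * u * v 0 (lift q i))).
  have hgq : g q = - (u *: \sum_(i < p.-1) v 0 (lift q i) *: g (lift q i)).
    move: hv; rewrite /relv /lc (bigD1_ord q) //= => /eqP; rewrite addr_eq0 => /eqP h.
    by rewrite -scalerN -h scalerA hu scale1r.
  rewrite /lc (bigD1_ord q) //= hgq.
  rewrite scalerN scalerA scaler_sumr -sumrN -big_split /=; apply: eq_bigr => j _.
  by rewrite !mxE scalerA scalerBl addrC.
- apply: NNPP => hne.
  have [c [hc hnc]] : exists c, relv g c /\ c != 0.
    apply: NNPP => h; apply: hfree; exists p, g => x.
    have [v hv] := gg x; exists (fun i => v 0 i); split.
      by rewrite hv.
    move=> c' hc'.
    have : relv g (v - \row_i c' i).
      rewrite /relv lcB -hv; apply/eqP; rewrite subr_eq0; apply/eqP.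
      by rewrite hc' /lc; apply: eq_bigr => i _; rewrite mxE.
    move=> hr; apply: functional_extensionality => i.
    case: (eqVneq (v - \row_i c' i) 0) => [/eqP|hn].
      by rewrite subr_eq0 => /eqP ->; rewrite mxE.
    by exfalso; apply: h; exists (v - \row_i c' i).
  have hin : forall c', relv g c' -> inNK g c'.
    by move=> c' hc'; apply: NNPP => hn'; apply: hne; exists c'.
  have [r [C hC]] := noeth_S hnoeth hpi (relv_submod g).
  have hrow : forall rho : 'I_r, exists w : 'rV[S]_r, redm w = 0 /\ row rho C = w *m C.
    move=> rho.
    have hr : relv g (row rho C) by apply/hC; exists (delta_mx 0 rho); rewrite rowE.
    have [L [E [P [hE hP ->]]]] := hin _ hr.
    have : forall l, exists y : 'rV[S]_r, row l P = y *m C by move=> l; apply/hC.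
    move/rows_exist => [Y hY].
    have hPY : P = Y *m C by apply/row_matrixP => l; rewrite row_mul hY.
    exists (E *m Y); split; first by rewrite map_mxM hE mul0mx.
    by rewrite hPY mulmxA.
  have [Xi hXi] := rows_exist hrow.
  have hC2 : C = Xi *m C by apply/row_matrixP => rho; rewrite row_mul; case: (hXi rho).
  have hXi0 : redm Xi = 0.
    apply/matrixP => i j; case: (hXi i) => /matrixP /(_ 0 j).
    by rewrite !mxE => -> _.
  have C0 : C = 0 by apply: (cancel_red1 hXi0); rewrite mulmxBl mul1mx -hC2 subrr.
  by move/hC: hc => [s0]; rewrite C0 mulmx0 => e; rewrite e eqxx in hnc.
Qed.
End Mod.

Lemma snd_sum (I : Type) (r : seq I) (P : pred I) (f : I -> S) :
  (\sum_(i <- r | P i) f i).2 = \sum_(i <- r | P i) (f i).2.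
Proof. exact: (big_morph (fun x : S => x.2) (@snd_add _ _ pi) (@snd0 _ _ pi)). Qed.

Lemma redm_lift m n (Z : 'M[k]_(m, n)) : redm (map_mx (liftS hpi) Z) = Z.
Proof. by apply/matrixP => i j; rewrite !mxE red_liftS. Qed.

Section Res.
Variables (M : lmodType S) (F : free_resolution M).
Hypothesis hF : is_free_resolution F.
Local Notation b := (fr_rank F).
Local Notation D := (fr_d F).

Lemma dd0 i : D i.+1 *m D i = 0.
Proof.
case: hF => _ _ h3; apply/row_matrixP => l; rewrite row_mul row0.
by apply/(h3 i); exists (delta_mx 0 l); rewrite rowE.
Qed.

Lemma step i (v : 'rV[S]_(b i.+1)) :
  redm (v *m D i) = 0 -> ~ (exists z, redm (v - z *m D i.+1) = 0) ->
  exists a : 'rV[S]_(b i.+2), a *m D i.+1 = tt_ pi *: v /\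
     ~ (exists z, redm (a - z *m D i.+2) = 0).
Proof.
move=> hv hnv; case: hF => _ _ h3.
have : (tt_ pi *: v) *m D i = 0.
  rewrite -scalemxAl; apply/rowP => j; rewrite !mxE.
  have e : (redm (v *m D i)) 0 j = 0 by rewrite hv mxE.
  rewrite tt_mul; move: e; rewrite !mxE => ->; by [].
move/h3 => [a ha]; exists a; split; first by rewrite ha.
move=> [z hz]; apply: hnv.
pose a' := a - z *m D i.+2.
have ha' : a' *m D i.+1 = tt_ pi *: v by rewrite /a' mulmxBl -mulmxA dd0 mulmx0 subr0 ha.
exists (\row_l liftS hpi (a' 0 l).2).
apply/rowP => j; rewrite !mxE.
have e0 : (a' *m D i.+1) 0 j = (tt_ pi *: v) 0 j by rewrite ha'.
have e := congr1 snd e0; rewrite /= !mxE in e.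
rewrite (snd_mul (tt_ pi)) /= rmorph0 mul0r add0r mulr1 in e.
apply/eqP; rewrite rmorphB subr_eq0; apply/eqP.
transitivity (pi (v 0 j).1); first by [].
rewrite -e snd_sum rmorph_sum /=.
apply: eq_bigr => l _; rewrite mxE rmorphM.
rewrite -[RHS]/(pi (liftk hpi (a' 0 l).2) * pi (D i.+1 l j).1) liftkP.
have -> : pi (a' 0 l).1 = 0.
  have e1 : (redm (a - z *m D i.+2)) 0 l = 0 by rewrite hz mxE.
  by move: e1; rewrite mxE.
by rewrite mul0r add0r mulrC.
Qed.

Lemma augE (u : 'rV[S]_(b 0)) : fr_aug F u = lc (fr_eps F) u.
Proof. by []. Qed.

Lemma base : finitely_generated_module M -> ~ free_module M ->
  exists v : 'rV[S]_(b 1), redm (v *m D 0) = 0 /\ ~ (exists z, redm (v - z *m D 1) = 0).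
Proof.
move=> hfg hfree.
have [p [h [gh hz [c [hc hnc]]]]] := KL hfg hfree.
case: hF => h1 h2 h3.
have [be hbe] := rows_exist (fun q => h1 (h q)).
have [al hal] := rows_exist (fun j => gh (fr_eps F j)).
have key u : lc h (u *m al) = fr_aug F u.
  rewrite lc_mul augE [RHS]/lc; apply: eq_bigr => j _; by rewrite -hal.
have hcb : fr_aug F (c *m be) = 0.
  rewrite augE lc_mul -[RHS]hc [RHS]/lc; apply: eq_bigr => q _; by rewrite -augE hbe.
have [w hw] := (h2 (c *m be)).1 hcb.
exists w; split; first by rewrite -hw map_mxM (hz c hc) mul0mx.
move=> [z hz']; apply: hnc.
pose eps := w - z *m D 1.
have heps : eps *m D 0 = c *m be by rewrite /eps mulmxBl -mulmxA dd0 mulmx0 subr0 hw.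
exists (b 1 + p)%N, (row_mx eps (- c)), (col_mx (D 0 *m al) (be *m al - 1%:M)).
split.
- by rewrite map_row_mx hz' map_mxN (hz c hc) oppr0 row_mx0.
- move=> l; rewrite -(splitK l); case: (split l) => l' /=.
    rewrite rowKu /relv row_mul key; apply/(h2 (row l' (D 0))).
    by exists (delta_mx 0 l'); rewrite rowE.
  rewrite rowKd /relv linearB /= row_mul lcB key hbe.
  have -> : lc h (row l' 1%:M) = h l'.
    rewrite /lc (bigD1 l') //= !mxE eqxx scale1r big1 ?addr0 // => q hq.
    by rewrite !mxE eq_sym (negbTE hq) scale0r.
  by rewrite subrr.
- rewrite mul_row_col mulmxA heps mulNmx mulmxBr mulmx1 mulmxA opprB addrC subrK //.
Qed.

Lemma chain : finitely_generated_module M -> ~ free_module M -> forall j,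
  exists v : 'rV[S]_(b j.+1), redm (v *m D j) = 0 /\ ~ (exists z, redm (v - z *m D j.+1) = 0).
Proof.
move=> hfg hfree; elim => [|j [v [hv hnv]]]; first exact: base.
have [a [ha hna]] := step hv hnv; exists a; split => //.
rewrite ha; apply/matrixP => x y; rewrite !mxE tt_mul.
by rewrite -[LHS]/(pi 0) rmorph0.
Qed.

End Res.

Lemma row_tr_mul n p (u : 'rV[S]_n) (c : 'rV[S]_p) jj : row jj u^T *m c = u 0 jj *: c.
Proof. by apply/rowP => q; rewrite !mxE big_ord1 !mxE. Qed.

Lemma tor_main (M N : lmodType S)
  (hMfg : finitely_generated_module M) (hNfg : finitely_generated_module N)
  (hMfree : ~ free_module M) (hNfree : ~ free_module N) :
  forall n : nat, (3 <= n)%N -> Tor_nonzero M N n.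
Proof.
move=> n hn F hF.
have [j ->] : exists j, n = j.+3 by exists (n - 3)%N; rewrite -addn3 subnK.
rewrite /=.
have [v [hv hnv]] := chain hF hMfg hMfree j.
have [a [ha hna]] := step hF hv hnv.
have [p [g [gg hz [c [hc hnc]]]]] := KL hNfg hNfree.
have hc0 q : rd (c 0 q) = 0.
  have e : (redm c) 0 q = 0 by rewrite (hz c hc) mxE.
  by move: e; rewrite mxE.
have hF' := hF; case: hF' => h1 h2 h3.
have hW : forall q, exists w : 'rV[S]_(fr_rank F j.+3), c 0 q *: a = w *m fr_d F j.+2.
  move=> q; apply/(h3 j.+1).
  rewrite -scalemxAl ha scalerA mul_tt.
  have -> : ((0, rd (c 0 q)) : S) = 0 by rewrite hc0.
  by rewrite scale0r.
have [W hW'] := rows_exist hW.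
pose x := fun l => \sum_q W q l *: g q.
exists x; split.
  move=> jj; rewrite /tensor_d /x.
  under eq_bigr => l _ do rewrite scaler_sumr.
  rewrite exchange_big /=.
  transitivity (\sum_q (a 0 jj * c 0 q) *: g q).
    apply: eq_bigr => q _.
    have e : (c 0 q *: a) 0 jj = (row q W *m fr_d F j.+2) 0 jj by rewrite hW'.
    rewrite !mxE in e; rewrite mulrC e scaler_suml; apply: eq_bigr => l _.
    by rewrite !mxE scalerA mulrC.
  under eq_bigr => q _ do rewrite -scalerA.
  by rewrite -scaler_sumr -/(lc g c) hc scaler0.
move=> [y hy].
have [eta heta] := rows_exist (fun m => gg (y m)).
pose D2 := fr_d F j.+2.
pose P := W^T - (fr_d F j.+3)^T *m eta.
have hP : forall l, relv g (row l P).
  move=> l; rewrite /relv /P linearB /= row_mul lcB lc_mul.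
  apply/eqP; rewrite subr_eq0; apply/eqP.
  transitivity (x l); first by rewrite /x /lc; apply: eq_bigr => q _; rewrite !mxE.
  by rewrite hy /tensor_d; apply: eq_bigr => m _; rewrite !mxE -heta.
have hWD : W *m D2 = c^T *m a.
  apply/matrixP => q l.
  have e : (c 0 q *: a) 0 l = (row q W *m D2) 0 l by rewrite hW'.
  rewrite !mxE in e; rewrite !mxE big_ord1 !mxE e.
  by apply: eq_bigr => i _; rewrite !mxE.
have hDP : D2^T *m P = a^T *m c.
  rewrite /P mulmxBr mulmxA -trmx_mul /D2.
  rewrite -[(fr_d F j.+2)^T *m (fr_d F j.+3)^T]trmx_mul (dd0 hF j.+2) trmx0 mul0mx subr0.
  by rewrite -/D2 hWD trmx_mul trmxK.
pose Phi := map_mx (liftS hpi) (cokermx (redm D2)).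
have nsub : ~~ (redm a <= redm D2)%MS.
  apply/negP => /submxP [Z hZ]; apply: hna; exists (map_mx (liftS hpi) Z).
  by rewrite map_mxB map_mxM redm_lift hZ subrr.
have hne : redm a *m cokermx (redm D2) != 0 by rewrite -submxE.
have [jj hjj] : exists jj, (redm a *m cokermx (redm D2)) 0 jj != 0.
  apply: NNPP => hall; move/negP: hne; apply; apply/eqP/matrixP => i0 jj.
  rewrite (ord1 i0) [RHS]mxE; apply: NNPP => hn0; apply: hall; exists jj.
  by apply/eqP.
have hre : rd ((a *m Phi) 0 jj) != 0.
  have e : (redm (a *m Phi)) 0 jj = (redm a *m cokermx (redm D2)) 0 jj.
    by rewrite map_mxM redm_lift.
  by move: e; rewrite [in LHS]mxE => ->.
have [mu hmu] := unitS' hre.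
have hDPhi : redm (D2 *m Phi) = 0 by rewrite map_mxM redm_lift mulmx_coker.
apply: hnc; exists (fr_rank F j.+3), (mu *: row jj (D2 *m Phi)^T), P; split => //.
  by rewrite map_mxZ map_row -map_trmx hDPhi trmx0 row0 scaler0.
rewrite -scalemxAl -row_mul trmx_mul -mulmxA hDP mulmxA -trmx_mul row_mul row_tr_mul.
by rewrite scalerA hmu scale1r.
Qed.

End Main.

Theorem theorem3p1 (R : comNzRingType) (k : fieldType) (pi : {rmorphism R -> k})
  (hnoeth : noetherian R) (hloc : local_ring R) (hpi : forall a : k, exists r : R, pi r = a)
  (M N : lmodType (triv_ext pi))
  (hMfg : finitely_generated_module M) (hNfg : finitely_generated_module N)
  (hM0 : nonzero_module M) (hN0 : nonzero_module N)
  (hMfree : ~ free_module M) (hNfree : ~ free_module N) :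
  forall n : nat, (3 <= n)%N -> Tor_nonzero M N n.
Proof.
exact: (tor_main hnoeth hloc hpi hMfg hNfg hMfree hNfree).
Qed.
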